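(* Let $S$ be a $\phi$-calibrated surrogate with potential $h:\mathcal{D}\to\mathbb{R}$ and calibration function $\zeta_h$. Suppose $h$ is $(1/\beta)$-strongly convex on $\mathcal{D}$ with respect to a norm $\|\cdot\|$ on $\mathcal{H}$, i.e. $h(u)\ge h(v)+\langle u-v,\nabla h(v)\rangle+\frac{1}{2\beta}\|u-v\|^2$ for all $u,v\in\mathcal{D}$. Then for all $\varepsilon\ge0$, $$\zeta_h(\varepsilon)\ge\frac{\varepsilon^2}{8\,c_{\psi,\|\cdot\|_*}^2\,\beta},\qquad c_{\psi,\|\cdot\|_*}=\max_{z\in\mathcal{Z}}\|\psi(z)\|_*,$$ where $\|\cdot\|_*$ is the dual norm of $\|\cdot\|$.
   Context: Let $\mathcal{Y},\mathcal{Z}$ be finite nonempty sets, $\mathcal{H}$ a finite-dimensional real Euclidean space, $\psi:\mathcal{Z}\to\mathcal{H}$, $\phi:\mathcal{Y}\to\mathcal{H}$, $c\in\mathbb{R}$, and $L(z,y)=\langle\psi(z),\phi(y)\rangle+c$. For $q\in\operatorname{Prob}(\mathcal{Y})$, $\mu(q)=\sum_y q(y)\phi(y)$; $\mathcal{M}=\operatorname{hull}(\phi(\mathcal{Y}))$. $\ell(z,q)=\mathbb{E}_{Y\sim q}L(z,Y)$, $\delta\ell(z,q)=\ell(z,q)-\min_{z'}\ell(z',q)$. $z(u)$ denotes an element of $\arg\min_{z}\langle\psi(z),u\rangle$ chosen by a fixed tie-breaking rule. For $S:\mathcal{V}\times\mathcal{Y}\to\mathbb{R}$, $s(v,q)=\mathbb{E}_{Y\sim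 q}S(v,Y)$, $\delta s(v,q)=s(v,q)-\inf_{v'}s(v',q)$. $D_h(u',u)=h(u')-h(u)-\langle u'-u,\nabla h(u)\rangle$. $S$ is $\phi$-calibrated with potential $h$ if there exist a convex $\mathcal{D}\supseteq\mathcal{M}$, strictly convex differentiable $h:\mathcal{D}\to\mathbb{R}$ and a continuous bijection $t:\mathcal{D}\to\mathcal{V}$ with $\delta s(v,q)=D_h(\mu(q),t^{-1}(v))$ for all $v,q$. Decoding $d(v)=z(t^{-1}(v))$. Calibration function $\zeta_h(\varepsilon)=\inf\{\delta s(v,q):\delta\ell(d(v),q)\ge\varepsilon\}$ ($\inf\emptyset=+\infty$). *)

(* Defs.v *)
From Stdlib Require Import Reals ClassicalEpsilon.
From mathcomp Require Import ssreflect ssrfun ssrbool eqtype ssrnat seq choice fintype bigop.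
Set Implicit Arguments. Unset Strict Implicit. Unset Printing Implicit Defensive.
Open Scope R_scope.

(* The finite-dimensional real Euclidean space H is modelled as R^n. *)
Definition vec (n : nat) := 'I_n -> R.
Definition inner {n} (u w : vec n) : R := \big[Rplus/0]_(i < n) (u i * w i).
Definition vadd {n} (u w : vec n) : vec n := fun i => u i + w i.
Definition vsub {n} (u w : vec n) : vec n := fun i => u i - w i.
Definition vscale {n} (a : R) (u : vec n) : vec n := fun i => a * u i.
Definition vzero {n} : vec n := fun _ => 0.
Definition enorm {n} (u : vec n) : R := sqrt (inner u u).

Definition is_norm {n} (N : vec n -> R) : Prop :=
  (forall x, 0 <= N x) /\ (forall x, N x = 0 -> x = vzero) /\
  (forall a x, N (vscale a x) = Rabs a * N x) /\
  (forall x y, N (vadd x y) <= N x + N y).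

(* sup / inf of sets of reals (chosen classically; meaningful when they exist) *)
Definition is_glb (E : R -> Prop) (m : R) : Prop :=
  (forall x, E x -> m <= x) /\ (forall b, (forall x, E x -> b <= x) -> b <= m).
Definition Rinf (E : R -> Prop) : R := epsilon (inhabits 0) (fun m => is_glb E m).
Definition Rsup (E : R -> Prop) : R := epsilon (inhabits 0) (fun m => is_lub E m).

Definition dual_norm {n} (N : vec n -> R) (y : vec n) : R :=
  Rsup (fun r => exists x, N x <= 1 /\ r = inner x y).

Definition fmax {T : finType} (f : T -> R) : R :=
  match enum T with [::] => 0 | x :: s => foldr (fun y acc => Rmax (f y) acc) (f x) s end.
Definition fmin {T : finType} (f : T -> R) : R :=
  match enum T with [::] => 0 | x :: s => foldr (fun y acc => Rmin (f y) acc) (f x) s end.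

Definition c_psi {Z : finType} {n} (N : vec n -> R) (psi : Z -> vec n) : R :=
  fmax (fun z => dual_norm N (psi z)).

Definition is_prob {Y : finType} (q : Y -> R) : Prop :=
  (forall y, 0 <= q y) /\ \big[Rplus/0]_(y : Y) q y = 1.

Definition mu {Y : finType} {n} (phi : Y -> vec n) (q : Y -> R) : vec n :=
  fun i => \big[Rplus/0]_(y : Y) (q y * phi y i).

Definition in_hull {Y : finType} {n} (phi : Y -> vec n) (u : vec n) : Prop :=
  exists q, is_prob q /\ u = mu phi q.

Definition Lt {Y Z : finType} {n} (psi : Z -> vec n) (phi : Y -> vec n) (c : R)
  (z : Z) (y : Y) : R := inner (psi z) (phi y) + c.
Definition ell {Y Z : finType} {n} (psi : Z -> vec n) (phi : Y -> vec n) (c : R)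
  (z : Z) (q : Y -> R) : R := \big[Rplus/0]_(y : Y) (q y * Lt psi phi c z y).
Definition delta_ell {Y Z : finType} {n} (psi : Z -> vec n) (phi : Y -> vec n) (c : R)
  (z : Z) (q : Y -> R) : R :=
  ell psi phi c z q - fmin (fun z' => ell psi phi c z' q).

(* z(u): a fixed tie-breaking selection of argmin_z <psi z, u> *)
Definition is_argmin_rule {Z : finType} {n} (psi : Z -> vec n) (zsel : vec n -> Z) : Prop :=
  forall u z, inner (psi (zsel u)) u <= inner (psi z) u.

Definition s_risk {Y : finType} {V : Type} (S : V -> Y -> R) (v : V) (q : Y -> R) : R :=
  \big[Rplus/0]_(y : Y) (q y * S v y).
Definition delta_s {Y : finType} {V : Type} (S : V -> Y -> R) (v : V) (q : Y -> R) : R :=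
  s_risk S v q - Rinf (fun r => exists v', r = s_risk S v' q).

Definition bregman {n} (h : vec n -> R) (grad : vec n -> vec n) (u' u : vec n) : R :=
  h u' - h u - inner (vsub u' u) (grad u).

Definition convex_set {n} (D : vec n -> Prop) : Prop :=
  forall u w l, D u -> D w -> 0 <= l <= 1 -> D (vadd (vscale l u) (vscale (1 - l) w)).

Definition strictly_convex_on {n} (D : vec n -> Prop) (h : vec n -> R) : Prop :=
  forall u w l, D u -> D w -> u <> w -> 0 < l < 1 ->
    h (vadd (vscale l u) (vscale (1 - l) w)) < l * h u + (1 - l) * h w.

Definition gradient_on {n} (D : vec n -> Prop) (h : vec n -> R) (grad : vec n -> vec n) : Prop :=
  forall u, D u -> forall eps, 0 < eps -> exists delta, 0 < delta /\
    forall w, D w -> enorm (vsub w u) < delta ->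
      Rabs (h w - h u - inner (vsub w u) (grad u)) <= eps * enorm (vsub w u).

Definition euclid_open {n} (O : vec n -> Prop) : Prop :=
  forall x, O x -> exists r, 0 < r /\ forall y, enorm (vsub y x) < r -> O y.
Definition is_topology {V : Type} (openV : (V -> Prop) -> Prop) : Prop :=
  openV (fun _ => True) /\ openV (fun _ => False) /\
  (forall A B, openV A -> openV B -> openV (fun x => A x /\ B x)) /\
  (forall (I : Type) (F : I -> V -> Prop), (forall i, openV (F i)) ->
      openV (fun x => exists i, F i x)).
Definition continuous_on {n} {V : Type} (openV : (V -> Prop) -> Prop)
  (D : vec n -> Prop) (t : vec n -> V) : Prop :=
  forall U, openV U -> exists O, euclid_open O /\
    forall u, D u -> (U (t u) <-> O u).

Definition phi_calibrated {Y : finType} {n} {V : Type} (openV : (V -> Prop) -> Prop)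
  (S : V -> Y -> R) (phi : Y -> vec n) (D : vec n -> Prop) (h : vec n -> R)
  (grad : vec n -> vec n) (t : vec n -> V) (tinv : V -> vec n) : Prop :=
  convex_set D /\ (forall u, in_hull phi u -> D u) /\
  strictly_convex_on D h /\ gradient_on D h grad /\
  is_topology openV /\ continuous_on openV D t /\
  (forall v, D (tinv v) /\ t (tinv v) = v) /\ (forall u, D u -> tinv (t u) = u) /\
  (* inf_{v'} s(v', q) is a (finite) real number *)
  (forall q, is_prob q -> exists m, is_glb (fun r => exists v, r = s_risk S v q) m) /\
  (forall v q, is_prob q -> delta_s S v q = bregman h grad (mu phi q) (tinv v)).

Definition strongly_convex_on {n} (D : vec n -> Prop) (h : vec n -> R)
  (grad : vec n -> vec n) (N : vec n -> R) (beta : R) : Prop :=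
  forall u w, D u -> D w ->
    h u >= h w + inner (vsub u w) (grad w) + / (2 * beta) * (N (vsub u w)) ^ 2.

Definition decode {V : Type} {Z : finType} {n} (zsel : vec n -> Z) (tinv : V -> vec n)
  (v : V) : Z := zsel (tinv v).

(* Main.v *)
Require Import Defs.
From HB Require Import structures.
From Stdlib Require Import Reals Lra Psatz ClassicalEpsilon FunctionalExtensionality.
From mathcomp Require Import ssreflect ssrfun ssrbool eqtype ssrnat seq choice fintype bigop.
Open Scope R_scope.
Set Warnings "-notation-overridden".

Lemma RplusA : associative Rplus. Proof. move=> *; ring. Qed.
Lemma RplusC : commutative Rplus. Proof. move=> *; ring. Qed.
Lemma Rplus0 : left_id 0 Rplus. Proof. move=> *; ring. Qed.
Lemma Rmul0l : left_zero 0 Rmult. Proof. move=> *; ring. Qed.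
Lemma Rmul0r : right_zero 0 Rmult. Proof. move=> *; ring. Qed.
Lemma RmulDl : left_distributive Rmult Rplus. Proof. move=> *; ring. Qed.
Lemma RmulDr : right_distributive Rmult Rplus. Proof. move=> *; ring. Qed.
HB.instance Definition _ := Monoid.isComLaw.Build R 0 Rplus RplusA RplusC Rplus0.
HB.instance Definition _ := Monoid.isMulLaw.Build R 0 Rmult Rmul0l Rmul0r.
HB.instance Definition _ := Monoid.isAddLaw.Build R Rmult Rplus RmulDl RmulDr.

Lemma sumR_split {I} (r : seq I) (f g : I -> R) :
  \big[Rplus/0]_(i <- r) (f i + g i) = \big[Rplus/0]_(i <- r) f i + \big[Rplus/0]_(i <- r) g i.
Proof. by rewrite big_split. Qed.

Lemma sumR_scal {I} (r : seq I) (f : I -> R) a :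
  \big[Rplus/0]_(i <- r) (a * f i) = a * \big[Rplus/0]_(i <- r) f i.
Proof. by rewrite big_distrr. Qed.

Lemma sumR_le {I} (r : seq I) (f g : I -> R) :
  (forall i, f i <= g i) -> \big[Rplus/0]_(i <- r) f i <= \big[Rplus/0]_(i <- r) g i.
Proof. move=> H; elim: r => [|x r IH]; rewrite ?big_nil ?big_cons; [lra| have := H x; lra]. Qed.

Lemma inner_comm {n} (a b : vec n) : inner a b = inner b a.
Proof. rewrite /inner; apply: eq_bigr => i _; ring. Qed.

Lemma inner_sub_r {n} (a b c : vec n) : inner a (vsub b c) = inner a b - inner a c.
Proof.
rewrite /inner /vsub.
have -> : \big[Rplus/0]_(i < n) (a i * (b i - c i)) =
  \big[Rplus/0]_(i < n) (a i * b i + (-1) * (a i * c i)) by apply: eq_bigr => i _; ring.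
rewrite sumR_split sumR_scal. move: (bigop _ _ _) (bigop _ _ _) => X Y. lra.
Qed.

Lemma inner_scale_l {n} (a : R) (x y : vec n) : inner (vscale a x) y = a * inner x y.
Proof.
rewrite /inner /vscale -(sumR_scal _ (fun i => x i * y i)); apply: eq_bigr => i _; ring.
Qed.

Lemma foldr_min_le {T : eqType} (f : T -> R) (x : T) (s : seq T) z :
  z \in x :: s -> foldr (fun y acc => Rmin (f y) acc) (f x) s <= f z.
Proof.
elim: s z => [|y s IH] z /=.
  by rewrite in_cons in_nil orbF => /eqP ->; lra.
rewrite !in_cons => /orP [/eqP ->|/orP [/eqP ->|Hz]].
- have := IH x; rewrite in_cons eqxx /= => H; have := H isT.
  have := Rmin_r (f y) (foldr (fun y0 acc => Rmin (f y0) acc) (f x) s); lra.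
- exact: Rmin_l.
- have := IH z; rewrite in_cons Hz orbT => H; have := H isT.
  have := Rmin_r (f y) (foldr (fun y0 acc => Rmin (f y0) acc) (f x) s); lra.
Qed.

Lemma foldr_max_ge {T : eqType} (f : T -> R) (x : T) (s : seq T) z :
  z \in x :: s -> f z <= foldr (fun y acc => Rmax (f y) acc) (f x) s.
Proof.
elim: s z => [|y s IH] z /=.
  by rewrite in_cons in_nil orbF => /eqP ->; lra.
rewrite !in_cons => /orP [/eqP ->|/orP [/eqP ->|Hz]].
- have := IH x; rewrite in_cons eqxx /= => H; have := H isT.
  have := Rmax_r (f y) (foldr (fun y0 acc => Rmax (f y0) acc) (f x) s); lra.
- exact: Rmax_l.
- have := IH z; rewrite in_cons Hz orbT => H; have := H isT.
  have := Rmax_r (f y) (foldr (fun y0 acc => Rmax (f y0) acc) (f x) s); lra.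
Qed.

Lemma foldr_min_att {T : eqType} (f : T -> R) (x : T) (s : seq T) :
  exists z, foldr (fun y acc => Rmin (f y) acc) (f x) s = f z.
Proof.
elim: s => [|y s [z Hz]] /=; first by exists x.
rewrite Hz /Rmin; case: Rle_dec => _; [by exists y | by exists z].
Qed.

Lemma fmin_le {T : finType} (f : T -> R) z : fmin f <= f z.
Proof.
rewrite /fmin; have : z \in enum T by rewrite mem_enum.
case: (enum T) => [|x s] //; exact: foldr_min_le.
Qed.

Lemma fmin_att {T : finType} (f : T -> R) : inhabited T -> exists z, fmin f = f z.
Proof.
case=> z0; rewrite /fmin; have : z0 \in enum T by rewrite mem_enum.
case: (enum T) => [|x s] //; move=> _; exact: foldr_min_att.
Qed.

Lemma fmax_ge {T : finType} (f : T -> R) z : f z <= fmax f.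
Proof.
rewrite /fmax; have : z \in enum T by rewrite mem_enum.
case: (enum T) => [|x s] //; exact: foldr_max_ge.
Qed.

Lemma ell_eq {Y Z : finType} {n} (psi : Z -> vec n) (phi : Y -> vec n) c z q :
  is_prob q -> ell psi phi c z q = inner (psi z) (mu phi q) + c.
Proof.
move=> [_ Hq]; rewrite /ell /Lt /inner /mu.
have -> : \big[Rplus/0]_(y : Y) (q y * (\big[Rplus/0]_(i < n) (psi z i * phi y i) + c)) =
  \big[Rplus/0]_(y : Y) (\big[Rplus/0]_(i < n) (psi z i * (q y * phi y i)) + c * q y).
  apply: eq_bigr => y _; rewrite RmulDr -sumR_scal; congr (_ + _); last ring.
  by apply: eq_bigr => i _; ring.
rewrite sumR_split sumR_scal Hq (exchange_big); congr (_ + _); last ring.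
by apply: eq_bigr => i _; rewrite sumR_scal.
Qed.

Definition upd {n} (x : vec n) (i : 'I_n) (b : R) : vec n :=
  fun j => if j == i then b else x j.

Definition InBox {n} (Rr : R) (s : seq 'I_n) (x0 x : vec n) : Prop :=
  forall j, (j \in s -> Rabs (x j) <= Rr) /\ (j \notin s -> x j = x0 j).

Definition clamp (Rr a : R) := Rmax (- Rr) (Rmin Rr a).

Lemma clamp_lip Rr a b : 0 <= Rr -> Rabs (clamp Rr a - clamp Rr b) <= Rabs (a - b).
Proof.
move=> H; rewrite /clamp /Rmax /Rmin.
repeat destruct Rle_dec; split_Rabs; lra.
Qed.

Lemma clamp_id Rr a : Rabs a <= Rr -> clamp Rr a = a.
Proof.
move=> H; rewrite /clamp /Rmax /Rmin.
repeat destruct Rle_dec; split_Rabs; lra.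
Qed.

Lemma clamp_bd Rr a : 0 <= Rr -> Rabs (clamp Rr a) <= Rr.
Proof.
move=> H; rewrite /clamp /Rmax /Rmin.
repeat destruct Rle_dec; split_Rabs; lra.
Qed.

Lemma lip_cont (G : R -> R) K : 0 <= K ->
  (forall a b, Rabs (G a - G b) <= K * Rabs (a - b)) -> forall x, continuity_pt G x.
Proof.
move=> HK HG x; rewrite /continuity_pt /continue_in /limit1_in /limit_in /=.
move=> eps He; exists (eps / (K + 1)); split.
  apply: Rdiv_lt_0_compat; lra.
move=> y [_ Hy]; rewrite /R_dist in Hy *.
have Hd : eps / (K + 1) * (K + 1) = eps by field; lra.
have := HG y x.
have := Rabs_pos (y - x).
nra.
Qed.

Lemma upd_same {n} (x : vec n) i b : upd x i b i = b.
Proof. by rewrite /upd eqxx. Qed.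
Lemma upd_other {n} (x : vec n) i j b : j != i -> upd x i b j = x j.
Proof. by rewrite /upd => /negbTE ->. Qed.

Lemma box_min {n} (F : vec n -> R) (L : 'I_n -> R) (Rr : R) :
  (forall i, 0 <= L i) -> 0 <= Rr ->
  (forall y i b, Rabs (F (upd y i b) - F y) <= L i * Rabs (b - y i)) ->
  forall s, uniq s -> forall x0, exists y, InBox Rr s x0 y /\
     forall z, InBox Rr s x0 z -> F y <= F z.
Proof.
move=> HL0 HR HL; elim=> [|i s IH] Hu x0.
  exists x0; split; first by move=> j; split.
  move=> z Hz; have -> : z = x0.
    by apply: functional_extensionality => j; have [_ ->] := Hz j.
  lra.
move: Hu => /= /andP [His Hu].
pose P a y := InBox Rr s (upd x0 i (clamp Rr a)) y /\
   forall z, InBox Rr s (upd x0 i (clamp Rr a)) z -> F y <= F z.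
pose m a := epsilon (inhabits x0) (P a).
have Hm : forall a, P a (m a).
  by move=> a; apply: epsilon_spec; apply: IH.
pose G a := F (m a).
have Htr : forall a b, G b <= G a + L i * Rabs (a - b).
  move=> a b; have [Hya _] := Hm a; have [_ Hyb] := Hm b.
  set y := m a in Hya *.
  have Hyi : y i = clamp Rr a.
    have [_ H] := Hya i; rewrite H ?His // upd_same //.
  have Hin : InBox Rr s (upd x0 i (clamp Rr b)) (upd y i (clamp Rr b)).
    move=> j; have [H1 H2] := Hya j; split.
      move=> Hj; have Hji : j != i by apply/eqP => E; move: His; rewrite -E Hj.
      by rewrite upd_other //; apply: H1.
    move=> Hj; case: (eqVneq j i) => [->|Hji]; first by rewrite !upd_same.
    by rewrite !upd_other // H2 // upd_other.
  have H1 := Hyb _ Hin.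
  have H2 := HL y i (clamp Rr b); rewrite Hyi in H2.
  have H3 := clamp_lip Rr b a HR.
  have H4 : L i * Rabs (clamp Rr b - clamp Rr a) <= L i * Rabs (a - b).
    rewrite (Rabs_minus_sym a b); apply: Rmult_le_compat_l => //.
  have H5 := Rle_abs (F (upd y i (clamp Rr b)) - F y).
  rewrite /G -/y; lra.
have Hlip : forall a b, Rabs (G a - G b) <= L i * Rabs (a - b).
  move=> a b; have := Htr a b; have := Htr b a; rewrite (Rabs_minus_sym b a).
  split_Rabs; lra.
have [amin [Hmin Hab]] : exists mx, (forall c, - Rr <= c <= Rr -> G mx <= G c) /\ - Rr <= mx <= Rr.
  apply: continuity_ab_min; first lra.
  move=> c _; exact: (lip_cont _ _ (HL0 i) Hlip c).
have Hca : clamp Rr amin = amin by apply: clamp_id; split_Rabs; lra.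
have [Hy1 Hy2] := Hm amin; rewrite Hca in Hy1 Hy2.
exists (m amin); split.
  move=> j; have [H1 H2] := Hy1 j; rewrite in_cons; split.
    case/orP => [/eqP Eji|Hj]; last by apply: H1.
    subst j.
    by rewrite H2 // upd_same; split_Rabs; lra.
  rewrite negb_or => /andP [Hji Hj]; by rewrite H2 // upd_other.
move=> z Hz.
have Hzi : Rabs (z i) <= Rr by apply: (proj1 (Hz i)); rewrite in_cons eqxx.
have Hzin : InBox Rr s (upd x0 i (clamp Rr (z i))) z.
  move=> j; have [H1 H2] := Hz j; split.
    by move=> Hj; apply: H1; rewrite in_cons Hj orbT.
  move=> Hj; rewrite (clamp_id _ _ Hzi); case: (eqVneq j i) => [->|Hji]; first by rewrite upd_same.
  by rewrite upd_other // H2 // in_cons negb_or Hji.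
have [_ Hmz] := Hm (z i).
have := Hmz z Hzin; have := Hmin (z i).
rewrite /G; move=> H; have := H ltac:(split_Rabs; lra); lra.
Qed.

Definition ev {n} (i : 'I_n) : vec n := fun j => if j == i then 1 else 0.

Lemma N_zero {n} (N : vec n -> R) : is_norm N -> N vzero = 0.
Proof.
move=> [_ [_ [Hsc _]]]; have -> : (vzero : vec n) = vscale 0 vzero.
  by apply: functional_extensionality => j; rewrite /vscale /vzero; ring.
rewrite Hsc Rabs_R0; ring.
Qed.

Lemma N_upd {n} (N : vec n -> R) y i b : is_norm N ->
  Rabs (N (upd y i b) - N y) <= N (ev i) * Rabs (b - y i).
Proof.
move=> HN; have [Hpos [Hdef [Hsc Htri]]] := HN.
have E1 : upd y i b = vadd y (vscale (b - y i) (ev i)).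
  apply: functional_extensionality => j; rewrite /upd /vadd /vscale /ev.
  case: (eqVneq j i) => [->|H]; ring.
have E2 : y = vadd (upd y i b) (vscale (y i - b) (ev i)).
  apply: functional_extensionality => j; rewrite /upd /vadd /vscale /ev.
  case: (eqVneq j i) => [->|H]; ring.
have H1 := Htri y (vscale (b - y i) (ev i)); rewrite Hsc -E1 in H1.
have H2 := Htri (upd y i b) (vscale (y i - b) (ev i)); rewrite Hsc -E2 in H2.
rewrite (Rabs_minus_sym (y i) b) in H2.
have := Rabs_pos (b - y i); have := Hpos (ev i).
split_Rabs; nra.
Qed.

Lemma face_min {n} (N : vec n -> R) (k : 'I_n) : is_norm N ->
  exists m, 0 < m /\ forall x, x k = 1 -> (forall j, Rabs (x j) <= 1) -> m <= N x.
Proof.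
move=> HN; have [Hpos [Hdef [Hsc Htri]]] := HN.
set s := filter (fun j => j != k) (enum 'I_n).
have Hu : uniq s by rewrite filter_uniq // enum_uniq.
have [y [Hy Hmin]] := box_min N (fun i => N (ev i)) 1 (fun i => Hpos _) ltac:(lra)
   (fun y i b => N_upd N y i b HN) s Hu (ev k).
have Hks : k \notin s by rewrite mem_filter eqxx.
have Hyk : y k = 1 by have [_ ->] := Hy k => //; rewrite /ev eqxx.
exists (N y); split.
  case: (Hpos y) => // /esym /Hdef Hy0.
  by move: Hyk; rewrite Hy0 /vzero; lra.
move=> x Hxk Hxj; apply: Hmin => j; split => // Hj.
have -> : j = k by move: Hj; rewrite mem_filter mem_enum andbT negbK => /eqP.
by rewrite Hxk /ev eqxx.
Qed.

Lemma faces_min {n} (N : vec n -> R) : is_norm N ->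
  exists m, 0 < m /\ forall k x, x k = 1 -> (forall j, Rabs (x j) <= 1) -> m <= N x.
Proof.
move=> HN.
suff : forall s : seq 'I_n, exists m, 0 < m /\ forall k, k \in s ->
  forall x, x k = 1 -> (forall j, Rabs (x j) <= 1) -> m <= N x.
  case/(_ (enum 'I_n)) => m [Hm H]; exists m; split => // k; apply: H; by rewrite mem_enum.
elim=> [|k s [m [Hm IH]]]; first by exists 1; split => //; lra.
have [mk [Hmk Hk]] := face_min N k HN.
exists (Rmin mk m); split; first by apply: Rmin_pos.
move=> k'; rewrite in_cons => /orP [/eqP ->|Hk'] x H1 H2.
  have := Hk x H1 H2; have := Rmin_l mk m; lra.
have := IH k' Hk' x H1 H2; have := Rmin_r mk m; lra.
Qed.

Lemma max_idx {T : eqType} (f : T -> R) (x : T) (s : seq T) :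
  exists k, forall z, z \in x :: s -> f z <= f k.
Proof.
elim: s => [|y s [k IH]].
  by exists x => z; rewrite in_cons in_nil orbF => /eqP ->; lra.
case: (Rle_dec (f y) (f k)) => Hyk.
  exists k => z; rewrite !in_cons => /orP [/eqP ->|/orP [/eqP ->|Hz]] //.
  - by apply: IH; rewrite in_cons eqxx.
  - by apply: IH; rewrite in_cons Hz orbT.
exists y => z; rewrite !in_cons => /orP [/eqP ->|/orP [/eqP ->|Hz]].
- have := IH x; rewrite in_cons eqxx => H; have := H isT; lra.
- lra.
- have := IH z; rewrite in_cons Hz orbT => H; have := H isT; lra.
Qed.

Lemma norm_lower {n} (N : vec n -> R) : is_norm N ->
  exists m, 0 < m /\ forall x i, m * Rabs (x i) <= N x.
Proof.
move=> HN; have [Hpos [Hdef [Hsc Htri]]] := HN.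
have [m [Hm Hf]] := faces_min N HN.
exists m; split => // x i.
have [k Hk] : exists k, forall j, Rabs (x j) <= Rabs (x k).
  have [k Hk] := max_idx (fun j => Rabs (x j)) i (enum 'I_n).
  by exists k => j; apply: Hk; rewrite in_cons mem_enum orbT.
case: (Req_dec (x k) 0) => Hxk.
  have := Hk i; rewrite Hxk Rabs_R0 => H.
  have := Rabs_pos (x i); have := Hpos x; nra.
pose y := vscale (/ x k) x.
have Hyk : y k = 1 by rewrite /y /vscale; field.
have Hyj : forall j, Rabs (y j) <= 1.
  move=> j; rewrite /y /vscale Rabs_mult Rabs_inv.
  have Hp : 0 < Rabs (x k) by apply: Rabs_pos_lt.
  have := Hk j; have := Rabs_pos (x j) => ? ?.
  apply: (Rmult_le_reg_l (Rabs (x k))) => //.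
  rewrite -Rmult_assoc Rinv_r; lra.
have := Hf k y Hyk Hyj; rewrite /y Hsc Rabs_inv => H.
have Hp : 0 < Rabs (x k) by apply: Rabs_pos_lt.
have : m * Rabs (x k) <= N x.
  apply: (Rmult_le_reg_l (/ Rabs (x k))); first by apply: Rinv_0_lt_compat.
  have -> : / Rabs (x k) * (m * Rabs (x k)) = m by field; lra.
  done.
have := Hk i; nra.
Qed.

Lemma inner_zero_l {n} (y : vec n) : inner vzero y = 0.
Proof.
rewrite /inner /vzero.
have -> : \big[Rplus/0]_(i < n) (0 * y i) = 0 * \big[Rplus/0]_(i < n) (y i) by rewrite sumR_scal.
move: (bigop _ _ _) => X; ring.
Qed.

Lemma dual_lub {n} (N : vec n -> R) (y : vec n) : is_norm N ->
  is_lub (fun r => exists x, N x <= 1 /\ r = inner x y) (dual_norm N y).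
Proof.
move=> HN; have [Hpos [Hdef [Hsc Htri]]] := HN.
have [m [Hm Hlow]] := norm_lower N HN.
rewrite /dual_norm /Rsup; apply: epsilon_spec.
have Hb : bound (fun r => exists x, N x <= 1 /\ r = inner x y).
  exists (/ m * \big[Rplus/0]_(i < n) Rabs (y i)) => r [x [Hx ->]].
  rewrite -sumR_scal /inner; apply: sumR_le => i.
  have := Hlow x i; have := Rabs_pos (y i); have := Rabs_pos (x i).
  have := Rle_abs (x i * y i); rewrite Rabs_mult => ? ? ? ?.
  have Hxi : Rabs (x i) <= / m.
    apply: (Rmult_le_reg_l m) => //; rewrite Rinv_r; lra.
  nra.
have Hne : exists r, exists x, N x <= 1 /\ r = inner x y.
  by exists 0, vzero; rewrite N_zero // inner_zero_l; split => //; lra.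
by have [l Hl] := completeness _ Hb Hne; exists l.
Qed.

Lemma inner_le_dual {n} (N : vec n -> R) (w y : vec n) : is_norm N ->
  inner w y <= N w * dual_norm N y.
Proof.
move=> HN; have [Hpos [Hdef [Hsc Htri]]] := HN.
have [Hub _] := dual_lub N y HN.
case: (Hpos w) => Hw.
  pose x := vscale (/ N w) w.
  have Hw' : N w <> 0 by apply: Rgt_not_eq.
  have Hx : N x = 1 by rewrite /x Hsc Rabs_inv Rabs_pos_eq ?Rinv_l //; lra.
  have Hin : exists x', N x' <= 1 /\ inner x y = inner x' y by exists x; split => //; lra.
  have := Hub (inner x y) Hin.
  rewrite /x inner_scale_l => H.
  have := Rmult_le_compat_l (N w) _ _ (Hpos w) H.
  rewrite -Rmult_assoc Rinv_r //; lra.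
have Hw0 := Hdef _ (esym Hw); rewrite Hw0 inner_zero_l N_zero //.
have Hin : exists x', N x' <= 1 /\ 0 = inner x' y.
  by exists vzero; rewrite N_zero // inner_zero_l; split => //; lra.
have := Hub 0 Hin.
lra.
Qed.

Lemma dual_ge0 {n} (N : vec n -> R) (y : vec n) : is_norm N -> 0 <= dual_norm N y.
Proof.
move=> HN; have [Hub _] := dual_lub N y HN.
apply: Hub; exists vzero; rewrite N_zero // inner_zero_l; split => //; lra.
Qed.

Theorem theorem4p3 (Y Z : finType) (n : nat) (psi : Z -> vec n) (phi : Y -> vec n)
  (c : R) (V : Type) (openV : (V -> Prop) -> Prop) (S : V -> Y -> R)
  (D : vec n -> Prop) (h : vec n -> R) (grad : vec n -> vec n)
  (t : vec n -> V) (tinv : V -> vec n) (zsel : vec n -> Z)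
  (N : vec n -> R) (beta : R) :
  inhabited Y -> inhabited Z ->
  phi_calibrated openV S phi D h grad t tinv ->
  is_argmin_rule psi zsel ->
  is_norm N -> 0 < beta -> strongly_convex_on D h grad N beta ->
  forall eps : R, 0 <= eps ->
  forall (v : V) (q : Y -> R), is_prob q ->
    eps <= delta_ell psi phi c (decode zsel tinv v) q ->
    eps ^ 2 / (8 * (c_psi N psi) ^ 2 * beta) <= delta_s S v q.
Proof.
move=> _ HZ [convD [hullD [sc [gr [top [cont [tinvP [tK [glb Hds]]]]]]]]] Harg HN Hb Hsc
  eps He v q Hq Hell.
have [Hpos [Hdef [Hscal Htri]]] := HN.
set u := tinv v.
set mu0 := mu phi q.
have Du : D u by have [] := tinvP v.
have Dmu : D mu0 by apply: hullD; exists q.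
set w := vsub mu0 u.
have Hs : / (2 * beta) * (N w) ^ 2 <= delta_s S v q.
  rewrite (Hds v q Hq) /bregman -/u -/mu0.
  have := Hsc mu0 u Dmu Du; rewrite -/w; lra.
set C := c_psi N psi.
have HC0 : 0 <= C.
  case: HZ => z0; have := fmax_ge (fun z => dual_norm N (psi z)) z0.
  have := dual_ge0 N (psi z0) HN; rewrite /C /c_psi; lra.
have HCz : forall z, dual_norm N (psi z) <= C by move=> z; exact: (fmax_ge (fun z => dual_norm N (psi z)) z).
have Hw0 := Hpos w.
have Hdl : eps <= 2 * C * N w.
  move: Hell; rewrite /delta_ell /decode -/u.
  have [zs Hzs] := fmin_att (fun z' => ell psi phi c z' q) HZ; rewrite Hzs.
  rewrite !ell_eq // -/mu0.
  set z := zsel u.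
  have Ha := Harg u zs; rewrite -/z in Ha.
  have E1 : inner (psi z) w = inner (psi z) mu0 - inner (psi z) u by rewrite inner_sub_r.
  have E2 : inner (psi zs) w = inner (psi zs) mu0 - inner (psi zs) u by rewrite inner_sub_r.
  have I1 := inner_le_dual N w (psi z) HN.
  have I2 := inner_le_dual N (vscale (-1) w) (psi zs) HN.
  rewrite inner_scale_l Hscal (inner_comm w) (inner_comm w) in I1 I2 *.
  rewrite Rabs_Ropp Rabs_R1 in I2.
  have := HCz z; have := HCz zs => ? ?.
  have : N w * dual_norm N (psi z) <= N w * C by apply: Rmult_le_compat_l.
  have : N w * dual_norm N (psi zs) <= N w * C by apply: Rmult_le_compat_l.
  lra.
case: HC0 => HC.
  have H1 : eps ^ 2 <= 4 * C ^ 2 * N w ^ 2 by nra.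
  have H2 : eps ^ 2 / (8 * C ^ 2 * beta) <= (4 * C ^ 2 * N w ^ 2) / (8 * C ^ 2 * beta).
    apply: Rmult_le_compat_r => //; left; apply: Rinv_0_lt_compat.
    have : 0 < C ^ 2 by apply: pow_lt.
    nra.
  have E : (4 * C ^ 2 * N w ^ 2) / (8 * C ^ 2 * beta) = / (2 * beta) * N w ^ 2.
    field; split; lra.
  lra.
rewrite -HC /Rdiv.
have -> : 8 * 0 ^ 2 * beta = 0 by ring.
rewrite Rinv_0 Rmult_0_r.
have : 0 <= / (2 * beta) * N w ^ 2.
  apply: Rmult_le_pos; [left; apply: Rinv_0_lt_compat; lra | apply: pow2_ge_0].
lra.
Qed.
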